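(* There is a universal constant $K>0$ such that the following holds. Let $\rho_1,\dots,\rho_T$ be $d$-dimensional quantum states, $\varrho=\rho_1\otimes\cdots\otimes\rho_T$, $\rho_{\mathrm{avg}}=\frac1T\sum_t\rho_t$, and $\mu=\mathrm{Tr}[(\rho_{\mathrm{avg}}-\frac Id)^2]$. Let $A=\frac1{T^2}\sum_{1\le i\ne j\le T}S_{ij}-\frac Id$, where $S_{ij}$ is the swap operator on the $i$th and $j$th tensor components of $(\mathbb C^d)^{\otimes T}$ and $\frac Id$ denotes $\frac1d$ times the identity on $(\mathbb C^d)^{\otimes T}$. Then $$\big|\mathbb E_\varrho[A]-\mu\big|\le\frac1T,\qquad \mathrm{Var}_\varrho[A]\le K\Big(\frac\mu T+\frac1{T^2}\Big).$$
   Context: $\mathbb E_\varrho[Y]=\mathrm{Tr}[\varrho Y]$ and $\mathrm{Var}_\varrho[Y]=\mathbb E_\varrho[Y^2]-\mathbb E_\varrho[Y]^2$. *)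

(* Defs.v *)
(* Complex scalars: an arbitrary numClosedFieldType C
   (e.g. algC, or R[i] for a real closed field R). *)
From HB Require Import structures.
From mathcomp Require Import all_boot all_order all_algebra.
From mathcomp Require Import perm.
Set Implicit Arguments. Unset Strict Implicit. Unset Printing Implicit Defensive.
Import Order.TTheory GRing.Theory Num.Theory.
Local Open Scope ring_scope.

Definition adjmx (C : numClosedFieldType) m n (M : 'M[C]_(m, n)) : 'M[C]_(n, m) :=
  (map_mx Num.conj M)^T.

Definition psd (C : numClosedFieldType) n (M : 'M[C]_n) : Prop :=
  adjmx M = M /\ forall v : 'cV[C]_n, 0 <= (adjmx v *m M *m v) 0 0.

Definition is_state (C : numClosedFieldType) d (rho : 'M[C]_d) : Prop :=
  psd rho /\ \tr rho = 1.

(* computational basis of (C^d)^{\otimes T}: indexed by functions 'I_T -> 'I_d *)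
Definition tidx (d T : nat) := {ffun 'I_T -> 'I_d}.
Definition tdim (d T : nat) : nat := #|{: tidx d T}|.
Definition tval d T (x : 'I_(tdim d T)) : tidx d T := enum_val x.

Definition tensor_states (C : numClosedFieldType) d T (rho : 'I_T -> 'M[C]_d)
  : 'M[C]_(tdim d T) :=
  \matrix_(x, y) \prod_(t < T) rho t (tval x t) (tval y t).

(* swap operator S_ab exchanging tensor factors a and b:
   S_ab |y> = |y o (a b)>, so <x|S_ab|y> = [x = y o (a b)] *)
Definition swap_op (C : numClosedFieldType) d T (a b : 'I_T) : 'M[C]_(tdim d T) :=
  \matrix_(x, y)
    ((tval x == [ffun k => tval y (tperm a b k)]) %:R).

Definition expect (C : numClosedFieldType) n (rho Y : 'M[C]_n) : C := \tr (rho *m Y).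
Definition variance (C : numClosedFieldType) n (rho Y : 'M[C]_n) : C :=
  expect rho (Y *m Y) - expect rho Y ^+ 2.

Definition obsA (C : numClosedFieldType) d T : 'M[C]_(tdim d T) :=
  (T%:R ^+ 2)^-1 *: (\sum_(i < T) \sum_(j < T | i != j) swap_op C d i j)
  - (d%:R)^-1 *: 1%:M.

Definition rho_avg (C : numClosedFieldType) d T (rho : 'I_T -> 'M[C]_d) : 'M[C]_d :=
  (T%:R)^-1 *: \sum_(t < T) rho t.

Definition mu_of (C : numClosedFieldType) d T (rho : 'I_T -> 'M[C]_d) : C :=
  let B := rho_avg rho - (d%:R)^-1 *: 1%:M in \tr (B *m B).

(* Main.v *)
Require Import Defs.
From HB Require Import structures.
From mathcomp Require Import all_boot all_order all_algebra perm.
From mathcomp Require Import ring lra.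
Set Implicit Arguments. Unset Strict Implicit. Unset Printing Implicit Defensive.
Import Order.TTheory GRing.Theory Num.Theory.
Local Open Scope ring_scope.


Section Infra.
Variable C : numClosedFieldType.
Variables d T : nat.
Variable rho : 'I_T -> 'M[C]_d.

Definition pop (pi : 'I_T -> 'I_T) : 'M[C]_(tdim d T) :=
  \matrix_(x < tdim d T, y < tdim d T) ((Defs.tval x == [ffun k => Defs.tval y (pi k)]) %:R).

Definition pexp (pi : 'I_T -> 'I_T) : C :=
  \sum_(f : tidx d T) \prod_(t < T) rho t (f t) (f (pi t)).

Lemma sum_tval (F : tidx d T -> C) :
  \sum_(x < tdim d T) F (Defs.tval x) = \sum_(f : tidx d T) F f.
Proof.
rewrite [RHS](reindex (@Defs.tval d T)) //.
by exists (@enum_rank _) => x _; [exact: enum_valK | exact: enum_rankK].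
Qed.

Lemma tval_rank (f : tidx d T) : Defs.tval (enum_rank f : 'I_(tdim d T)) = f.
Proof. exact: enum_rankK. Qed.

Lemma expect_pop pi : expect (tensor_states rho) (pop pi) = pexp pi.
Proof.
rewrite /expect /mxtrace /pexp -sum_tval; apply: eq_bigr => x _.
rewrite !mxE (bigD1 (enum_rank [ffun k => Defs.tval x (pi k)] : 'I_(tdim d T))) //=.
rewrite big1 ?addr0.
  by rewrite !mxE tval_rank eqxx mulr1; apply: eq_bigr => t _; rewrite ffunE.
move=> y hy; rewrite !mxE.
case: eqP => [e|]; last by rewrite mulr0.
by move: hy; rewrite -e /Defs.tval enum_valK eqxx.
Qed.

Lemma pop_mul pi sg : pop pi *m pop sg = pop (fun k => sg (pi k)).
Proof.
apply/matrixP => x y; rewrite !mxE.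
rewrite (bigD1 (enum_rank [ffun k => Defs.tval y (sg k)] : 'I_(tdim d T))) //=.
rewrite big1 ?addr0.
  rewrite !mxE tval_rank eqxx mulr1.
  congr (_ %:R); congr (_ == _); apply/ffunP => k; rewrite !ffunE //.
move=> z hz; rewrite !mxE.
case: (eqVneq (Defs.tval z) [ffun k => Defs.tval y (sg k)]) => [e|]; last by rewrite mulr0.
by move: hz; rewrite -e /Defs.tval enum_valK eqxx.
Qed.

Lemma swap_pop a b : swap_op C d a b = pop (tperm a b).
Proof. by []. Qed.

Lemma expect1 : expect (tensor_states rho) 1%:M = pexp id.
Proof.
rewrite /expect mulmx1 /mxtrace /pexp -sum_tval; apply: eq_bigr => x _.
by rewrite mxE.
Qed.

Lemma pexp_ext pi sg : (forall t, pi t = sg t) -> pexp pi = pexp sg.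
Proof.
move=> e; apply: eq_bigr => f _; apply: eq_bigr => t _; by rewrite e.
Qed.


Lemma sum_prod (H : 'I_T -> 'I_d -> C) :
  \sum_(f : tidx d T) \prod_(t < T) H t (f t) = \prod_(t < T) \sum_(v < d) H t v.
Proof. by rewrite bigA_distr_bigA. Qed.

Lemma pin (b : 'I_T) (Phi : tidx d T -> C) :
  \sum_(f : tidx d T) Phi f = \sum_(v < d) \sum_(f : tidx d T) (f b == v)%:R * Phi f.
Proof.
rewrite exchange_big; apply: eq_bigr => f _; rewrite -big_distrl /=.
rewrite (bigD1 (f b)) //= eqxx big1 ?addr0 ?mul1r // => v.
by rewrite eq_sym => /negbTE ->.
Qed.

Lemma prod_split (G : 'I_T -> C) (s : seq 'I_T) : uniq s ->
  \prod_(t < T) G t = (\prod_(t <- s) G t) * \prod_(t < T | t \notin s) G t.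
Proof.
move=> us; rewrite (bigID (fun t => t \in s)) /= big_uniq //.
Qed.

Lemma tr2 (A B : 'M[C]_d) : \tr (A *m B) = \sum_(i < d) \sum_(j < d) A i j * B j i.
Proof. by apply: eq_bigr => i _; rewrite mxE. Qed.

Lemma tr3 (A B D : 'M[C]_d) :
  \tr (A *m B *m D) = \sum_(i < d) \sum_(j < d) \sum_(k < d) A i j * B j k * D k i.
Proof.
apply: eq_bigr => i _; rewrite mxE; under eq_bigr do rewrite mxE big_distrl /=.
by rewrite exchange_big.
Qed.

Hypothesis htr : forall t, \tr (rho t) = 1.

Lemma pexp_id pi : (forall t, pi t = t) -> pexp pi = 1.
Proof.
move=> e; rewrite /pexp.
under eq_bigr do under eq_bigr do rewrite e.
rewrite (sum_prod (fun t v => rho t v v)) big1 // => t _.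
by rewrite -(htr t).
Qed.


Lemma sum_delta (v : 'I_d) : \sum_(x < d) ((x == v)%:R : C) = 1.
Proof.
by rewrite (bigD1 v) //= eqxx big1 ?addr0 // => x /negbTE ->.
Qed.

Lemma rest1 (s : seq 'I_T) (H : 'I_T -> 'I_d -> C) :
  (forall t, t \notin s -> H t =1 fun x => rho t x x) ->
  \prod_(t < T | t \notin s) \sum_(x < d) H t x = 1.
Proof.
move=> h; apply: big1 => t ts; rewrite -(htr t); apply: eq_bigr => x _.
by rewrite h.
Qed.

Lemma pexp_2 pi a b : a != b -> pi a = b -> pi b = a ->
  (forall t, t != a -> t != b -> pi t = t) -> pexp pi = \tr (rho a *m rho b).
Proof.
move=> ab pa pb pr.
pose H (v : 'I_d) t x := if t == a then rho a x v * rho b v x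
  else if t == b then (x == v)%:R else rho t x x.
have us : uniq [:: a; b] by rewrite /= inE ab.
have Hr v t : t \notin [:: a; b] -> H v t =1 fun x => rho t x x.
  by rewrite !inE negb_or => /andP[ta tb] x; rewrite /H (negbTE ta) (negbTE tb).
rewrite /pexp (pin b).
transitivity (\sum_(v < d) \sum_(f : tidx d T) \prod_(t < T) H v t (f t)).
  apply: eq_bigr => v _; apply: eq_bigr => f _.
  rewrite (prod_split _ us) (prod_split (fun t => H v t (f t)) us) !big_cons !big_nil.
  have -> : \prod_(t < T | t \notin [:: a; b]) H v t (f t) =
            \prod_(t < T | t \notin [:: a; b]) rho t (f t) (f (pi t)).
    apply: eq_bigr => t ts; rewrite Hr //.
    by move: ts; rewrite !inE negb_or => /andP[ta tb]; rewrite pr.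
  rewrite /H eqxx (eq_sym b a) (negbTE ab) eqxx pa pb.
  by case: (eqVneq (f b) v) => [->|ne]; rewrite ?eqxx ?(negbTE ne) /=; ring.
under eq_bigr do rewrite sum_prod.
rewrite tr2 exchange_big; apply: eq_bigr => v _.
rewrite (prod_split _ us) !big_cons !big_nil (rest1 (Hr v)).
rewrite /H eqxx (eq_sym b a) (negbTE ab) eqxx sum_delta.
by rewrite !mulr1.
Qed.


Lemma pexp_3 pi a b c : a != b -> a != c -> b != c ->
  pi a = b -> pi b = c -> pi c = a ->
  (forall t, t != a -> t != b -> t != c -> pi t = t) ->
  pexp pi = \tr (rho a *m rho b *m rho c).
Proof.
move=> ab ac bc pa pb pc pr.
pose H (v w : 'I_d) t x := if t == a then rho a x v * rho c w x
  else if t == b then (x == v)%:R * rho b v w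
  else if t == c then (x == w)%:R else rho t x x.
have us : uniq [:: a; b; c] by rewrite /= !inE negb_or ab ac bc.
have Hr v w t : t \notin [:: a; b; c] -> H v w t =1 fun x => rho t x x.
  rewrite !inE !negb_or => /and3P[ta tb tc] x.
  by rewrite /H (negbTE ta) (negbTE tb) (negbTE tc).
rewrite /pexp (pin b).
transitivity (\sum_(v < d) \sum_(w < d) \sum_(f : tidx d T) \prod_(t < T) H v w t (f t)).
  apply: eq_bigr => v _; rewrite (pin c); apply: eq_bigr => w _.
  apply: eq_bigr => f _.
  rewrite (prod_split _ us) (prod_split (fun t => H v w t (f t)) us) !big_cons !big_nil.
  have -> : \prod_(t < T | t \notin [:: a; b; c]) H v w t (f t) =
            \prod_(t < T | t \notin [:: a; b; c]) rho t (f t) (f (pi t)).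
    apply: eq_bigr => t ts; rewrite Hr //.
    by move: ts; rewrite !inE !negb_or => /and3P[ta tb tc]; rewrite pr.
  rewrite /H eqxx (eq_sym b a) (negbTE ab) eqxx (eq_sym c a) (negbTE ac).
  rewrite (eq_sym c b) (negbTE bc) eqxx pa pb pc.
  case: (eqVneq (f b) v) => [->|nb]; case: (eqVneq (f c) w) => [->|nc];
    rewrite ?eqxx ?(negbTE nb) ?(negbTE nc) /=; ring.
under eq_bigr do under eq_bigr do rewrite sum_prod.
rewrite tr3 [RHS]exchange_big; apply: eq_bigr => v _.
rewrite [RHS]exchange_big; apply: eq_bigr => w _.
rewrite (prod_split _ us) !big_cons !big_nil (rest1 (Hr v w)).
rewrite /H eqxx (eq_sym b a) (negbTE ab) eqxx (eq_sym c a) (negbTE ac).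
rewrite (eq_sym c b) (negbTE bc) eqxx sum_delta -big_distrl sum_delta /=.
rewrite !mulr1 mul1r big_distrl /=; apply: eq_bigr => x _; ring.
Qed.

Lemma pexp_22 pi a b c e : a != b -> a != c -> a != e -> b != c -> b != e -> c != e ->
  pi a = b -> pi b = a -> pi c = e -> pi e = c ->
  (forall t, t != a -> t != b -> t != c -> t != e -> pi t = t) ->
  pexp pi = \tr (rho a *m rho b) * \tr (rho c *m rho e).
Proof.
move=> ab ac ae bc be ce pa pb pc pe pr.
pose H (v w : 'I_d) t x := if t == a then rho a x v * rho b v x
  else if t == b then (x == v)%:R
  else if t == c then rho c x w * rho e w x
  else if t == e then (x == w)%:R else rho t x x.
have us : uniq [:: a; b; c; e] by rewrite /= !inE !negb_or ab ac ae bc be ce.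
have Hr v w t : t \notin [:: a; b; c; e] -> H v w t =1 fun x => rho t x x.
  rewrite !inE !negb_or => /and4P[ta tb tc te] x.
  by rewrite /H (negbTE ta) (negbTE tb) (negbTE tc) (negbTE te).
rewrite /pexp (pin b).
transitivity (\sum_(v < d) \sum_(w < d) \sum_(f : tidx d T) \prod_(t < T) H v w t (f t)).
  apply: eq_bigr => v _; rewrite (pin e); apply: eq_bigr => w _.
  apply: eq_bigr => f _.
  rewrite (prod_split _ us) (prod_split (fun t => H v w t (f t)) us) !big_cons !big_nil.
  have -> : \prod_(t < T | t \notin [:: a; b; c; e]) H v w t (f t) =
            \prod_(t < T | t \notin [:: a; b; c; e]) rho t (f t) (f (pi t)).
    apply: eq_bigr => t ts; rewrite Hr //.
    by move: ts; rewrite !inE !negb_or => /and4P[ta tb tc te]; rewrite pr.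
  rewrite /H eqxx (eq_sym b a) (negbTE ab) eqxx (eq_sym c a) (negbTE ac).
  rewrite (eq_sym c b) (negbTE bc) eqxx (eq_sym e a) (negbTE ae).
  rewrite (eq_sym e b) (negbTE be) (eq_sym e c) (negbTE ce) eqxx pa pb pc pe.
  case: (eqVneq (f b) v) => [->|nb]; case: (eqVneq (f e) w) => [->|nc];
    rewrite ?eqxx ?(negbTE nb) ?(negbTE nc) /=; ring.
under eq_bigr do under eq_bigr do rewrite sum_prod.
rewrite !tr2 [X in _ = X * _]exchange_big [X in _ = _ * X]exchange_big.
rewrite big_distrl; apply: eq_bigr => v _.
rewrite big_distrr; apply: eq_bigr => w _.
rewrite (prod_split _ us) !big_cons !big_nil (rest1 (Hr v w)).
rewrite /H eqxx (eq_sym b a) (negbTE ab) eqxx (eq_sym c a) (negbTE ac).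
rewrite (eq_sym c b) (negbTE bc) eqxx (eq_sym e a) (negbTE ae).
rewrite (eq_sym e b) (negbTE be) (eq_sym e c) (negbTE ce) eqxx !sum_delta.
by rewrite !mulr1 mul1r.
Qed.

End Infra.


Lemma pair_sum (C : numClosedFieldType) T (c : 'I_T -> 'I_T -> C) i j : i != j ->
  (forall k l, c k l = c l k) ->
  (forall k l, k != l -> k != i -> k != j -> l != i -> l != j -> c k l = 0) ->
  \sum_(k < T) \sum_(l < T | k != l) c k l =
  2 * c i j + 2 * \sum_(l < T | (l != i) && (l != j)) (c i l + c j l).
Proof.
move=> ij cs c0.
have ji : j != i by rewrite eq_sym.
rewrite (bigD1 i) //= [\sum_(k < T | k != i) _](bigD1 j) //=.
rewrite [\sum_(l < T | i != l) _](bigD1 j) //= [\sum_(l < T | j != l) _](bigD1 i) //=.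
have -> : \sum_(k < T | (k != i) && (k != j)) \sum_(l < T | k != l) c k l =
          \sum_(k < T | (k != i) && (k != j)) (c i k + c j k).
  apply: eq_bigr => k /andP[ki kj].
  rewrite (bigD1 i) //= (bigD1 j) /=; last by rewrite kj ji.
  rewrite big1 ?addr0; first by rewrite (cs k i) (cs k j).
  move=> l /andP[/andP[kl li] lj]; apply: c0 => //.
have e1 : \sum_(i0 < T | (i != i0) && (i0 != j)) c i i0 =
          \sum_(l < T | (l != i) && (l != j)) c i l.
  by apply: eq_bigl => l; rewrite eq_sym.
have e2 : \sum_(i0 < T | (j != i0) && (i0 != i)) c j i0 =
          \sum_(l < T | (l != i) && (l != j)) c j l.
  by apply: eq_bigl => l; rewrite eq_sym andbC.
rewrite e1 e2 (cs j i) big_split /=.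
ring.
Qed.


Lemma sum3_prod (R : comRingType) n (X Y Z : 'I_n -> R) :
  \sum_(i < n) \sum_(j < n) \sum_(k < n) X i * Y j * Z k =
  (\sum_(i < n) X i) * ((\sum_(j < n) Y j) * (\sum_(k < n) Z k)).
Proof.
rewrite [RHS]big_distrl /=; apply: eq_bigr => i _.
rewrite [X in _ = _ * X]big_distrl [RHS]big_distrr /=; apply: eq_bigr => j _.
rewrite [X in _ = _ * X]big_distrr [RHS]big_distrr /=; apply: eq_bigr => k _; ring.
Qed.

Section Mat.
Variable C : numClosedFieldType.
Variable n : nat.
Implicit Types M P Q A B D X : 'M[C]_n.

Definition quad (v : 'cV[C]_n) M := (adjmx v *m M *m v) 0 0.

Lemma adjmxE m k (M : 'M[C]_(m, k)) i j : adjmx M i j = (M j i)^*.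
Proof. by rewrite /adjmx !mxE. Qed.

Lemma herm_conj M : adjmx M = M -> forall i j, (M i j)^* = M j i.
Proof. by move=> h i j; rewrite -adjmxE h. Qed.

Lemma quadE v M : quad v M = \sum_(l < n) \sum_(k < n) (v l 0)^* * M l k * v k 0.
Proof.
rewrite /quad !mxE; under eq_bigr do rewrite mxE big_distrl /=.
rewrite exchange_big; apply: eq_bigr => l _; apply: eq_bigr => k _.
by rewrite adjmxE.
Qed.

Lemma sum1pt (F : 'I_n -> C) i : (forall k, k != i -> F k = 0) ->
  \sum_(k < n) F k = F i.
Proof. by move=> h; rewrite (bigD1 i) //= big1 ?addr0. Qed.

Lemma sum2pt (F : 'I_n -> C) i j : i != j ->
  (forall k, k != i -> k != j -> F k = 0) -> \sum_(k < n) F k = F i + F j.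
Proof.
move=> ij h; rewrite (bigD1 i) //= (bigD1 j) /=; last by rewrite eq_sym.
by rewrite big1 ?addr0 // => k /andP[]; apply: h.
Qed.

Lemma psd_herm M : psd M -> adjmx M = M.
Proof. by case. Qed.

Lemma psd_diag M : psd M -> forall i, 0 <= M i i.
Proof.
move=> [_ hq] i; have := hq (\col_k ((k == i)%:R)).
rewrite -/(quad _ _) quadE (sum1pt (i := i)); last first.
  by move=> l li; apply: big1 => k _; rewrite !mxE (negbTE li) rmorph0 !mul0r.
rewrite (sum1pt (i := i)); last by move=> k ki; rewrite !mxE (negbTE ki) mulr0.
by rewrite !mxE eqxx rmorph1 mul1r mulr1.
Qed.

Lemma quad2 M i j (z w : C) : i != j ->
  quad (\col_k (if k == i then z else if k == j then w else 0)) M =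
  z^* * M i i * z + z^* * M i j * w + w^* * M j i * z + w^* * M j j * w.
Proof.
move=> ij; have ji : j != i by rewrite eq_sym.
rewrite quadE (sum2pt ij); last first.
  move=> l li lj; apply: big1 => k _.
  by rewrite !mxE (negbTE li) (negbTE lj) rmorph0 !mul0r.
rewrite !(sum2pt ij); try by move=> k ki kj; rewrite !mxE (negbTE ki) (negbTE kj) mulr0.
by rewrite !mxE eqxx (negbTE ji) eqxx; ring.
Qed.

Lemma psd_minor M i j : psd M -> `|M i j| ^+ 2 <= M i i * M j j.
Proof.
move=> hM; have [_ hq] := hM.
case: (eqVneq i j) => [<-|ij].
  have h0 := psd_diag hM i.
  by rewrite ger0_norm // expr2.
have ha := psd_diag hM i; have hb := psd_diag hM j.
have hx : M j i = (M i j)^* by rewrite herm_conj ?psd_herm.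
set a := M i i in ha *; set b := M j j in hb *; set x := M i j in hx *.
have ca : a^* = a by apply: conj_Creal; apply: ger0_real.
have cb : b^* = b by apply: conj_Creal; apply: ger0_real.
rewrite normCK -subr_ge0.
set D := a * b - x * x^*.
have Hq (z w : C) : 0 <= z^* * a * z + z^* * x * w + w^* * x^* * z + w^* * b * w.
  have := hq (\col_k (if k == i then z else if k == j then w else 0)).
  by rewrite -/(quad _ _) quad2 // -/a -/b -/x hx.
have Q1 := Hq b (- x^*). have Q2 := Hq (- x) a. have Q3 := Hq 1 (- x^*).
have cN (u : C) : (- u)^* = - u^* by rewrite rmorphN.
have c1 : (1 : C)^* = 1 by rewrite rmorph1.
rewrite ?cN ?conjCK ?cb ?ca ?c1 in Q1 Q2 Q3.
have e1 : b * a * b + b * x * - x^* + - x * x^* * b + - x * b * - x^* = b * D.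
  by rewrite /D; ring.
have e2 : - x^* * a * - x + - x^* * x * a + a * x^* * - x + a * b * a = a * D.
  by rewrite /D; ring.
have e3 : 1 * a * 1 + 1 * x * - x^* + - x * x^* * 1 + - x * b * - x^* =
   a + b * (x * x^*) + 2 * (D - a * b).
  by rewrite /D; ring.
rewrite e1 in Q1; rewrite e2 in Q2; rewrite e3 in Q3.
case: (eqVneq (a + b) 0) => [ab0|ab0].
  move/eqP: ab0; rewrite paddr_eq0 // => /andP[/eqP a0 /eqP b0].
  move: Q3; rewrite a0 b0 !mul0r !add0r subr0.
  by rewrite pmulr_rge0 // ltr0n.
have hab : 0 < a + b by rewrite lt0r ab0 addr_ge0.
rewrite -(pmulr_rge0 _ hab) mulrDl; exact: addr_ge0.
Qed.


Lemma psd_entry M i j : psd M -> `|M i j| <= sqrtC (M i i) * sqrtC (M j j).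
Proof.
move=> hM; have hi := psd_diag hM i; have hj := psd_diag hM j.
rewrite -sqrtCM ?nnegrE // -(sqrCK (normr_ge0 (M i j))).
by rewrite ler_sqrtC ?nnegrE ?exprn_ge0 ?mulr_ge0 // psd_minor.
Qed.

Lemma amgm (x y : C) : x \is Num.real -> y \is Num.real -> 2 * x * y <= x ^+ 2 + y ^+ 2.
Proof.
move=> xr yr; rewrite -subr_ge0.
have -> : x ^+ 2 + y ^+ 2 - 2 * x * y = (x - y) ^+ 2 by ring.
by apply: real_exprn_even_ge0 => //; apply: rpredB.
Qed.

Lemma trE2 (A B : 'M[C]_n) : \tr (A *m B) = \sum_(i < n) \sum_(j < n) A i j * B j i.
Proof. by apply: eq_bigr => i _; rewrite mxE. Qed.

Lemma trE3 (A B D : 'M[C]_n) :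
  \tr (A *m B *m D) = \sum_(i < n) \sum_(j < n) \sum_(k < n) A i j * B j k * D k i.
Proof.
apply: eq_bigr => i _; rewrite mxE; under eq_bigr do rewrite mxE big_distrl /=.
by rewrite exchange_big.
Qed.

Lemma sq_real M i : psd M -> sqrtC (M i i) \is Num.real.
Proof. by move=> h; apply: sqrtC_real; apply: psd_diag. Qed.

Lemma sq_ge0 M i : psd M -> 0 <= sqrtC (M i i).
Proof. by move=> h; rewrite sqrtC_ge0; apply: psd_diag. Qed.

Lemma tr_mul_le P Q : psd P -> psd Q -> `|\tr (P *m Q)| <= \tr P * \tr Q.
Proof.
move=> hP hQ.
pose p i := sqrtC (P i i); pose q i := sqrtC (Q i i).
rewrite trE2; apply: le_trans (ler_norm_sum _ _ _) _.
apply: (@le_trans _ _ (\sum_(i < n) \sum_(j < n) (p i * p j) * (q j * q i))).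
  apply: ler_sum => i _; apply: le_trans (ler_norm_sum _ _ _) _.
  apply: ler_sum => j _; rewrite normrM.
  by apply: ler_pM => //; apply: psd_entry.
rewrite -(ler_pM2l (x := 2)) ?ltr0n //.
have -> : \tr P * \tr Q = \sum_(i < n) \sum_(j < n) P i i * Q j j.
  rewrite /mxtrace big_distrl; apply: eq_bigr => i _; by rewrite big_distrr.
have -> : 2 * \sum_(i < n) \sum_(j < n) P i i * Q j j =
  \sum_(i < n) \sum_(j < n) (P i i * Q j j + P j j * Q i i).
  rewrite mulr2n mulrDl mul1r; under [RHS]eq_bigr do rewrite big_split /=.
  rewrite big_split /=; congr (_ + _); rewrite exchange_big /=.
  by apply: eq_bigr => i _; apply: eq_bigr => j _; rewrite mulrC.
rewrite mulr_sumr; apply: ler_sum => i _; rewrite mulr_sumr; apply: ler_sum => j _.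
have e1 : P i i * Q j j = (p i * q j) ^+ 2 by rewrite exprMn !sqrtCK.
have e2 : P j j * Q i i = (p j * q i) ^+ 2 by rewrite exprMn !sqrtCK.
rewrite e1 e2; apply: le_trans (amgm _ _) => //; last first.
- by apply: rpredM; apply: sq_real.
- by apply: rpredM; apply: sq_real.
by rewrite !mulrA le_eqVlt; apply/orP; left; apply/eqP; ring.
Qed.


Lemma sum_sq_le A B : psd A -> psd B -> \tr A = 1 -> \tr B = 1 ->
  \sum_(i < n) sqrtC (A i i) * sqrtC (B i i) <= 1.
Proof.
move=> hA hB tA tB.
rewrite -(ler_pM2l (x := 2)) ?ltr0n // mulr1 mulr_sumr.
apply: (@le_trans _ _ (\sum_(i < n) (sqrtC (A i i) ^+ 2 + sqrtC (B i i) ^+ 2))).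
  apply: ler_sum => i _; rewrite mulrA; apply: amgm; exact: sq_real.
under eq_bigr do rewrite !sqrtCK.
by rewrite big_split /= -!/(mxtrace _) tA tB.
Qed.

Lemma sum_sq_ge0 A B : psd A -> psd B -> 0 <= \sum_(i < n) sqrtC (A i i) * sqrtC (B i i).
Proof. by move=> hA hB; apply: sumr_ge0 => i _; apply: mulr_ge0; apply: sq_ge0. Qed.

Lemma tr3_le A B D : psd A -> psd B -> psd D -> \tr A = 1 -> \tr B = 1 -> \tr D = 1 ->
  `|\tr (A *m B *m D)| <= 1.
Proof.
move=> hA hB hD tA tB tD.
pose a i := sqrtC (A i i); pose b i := sqrtC (B i i); pose c i := sqrtC (D i i).
rewrite trE3; apply: le_trans (ler_norm_sum _ _ _) _.
apply: (@le_trans _ _ (\sum_(i < n) \sum_(j < n) \sum_(k < n)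
    (a i * c i) * (a j * b j) * (b k * c k))).
  apply: ler_sum => i _; apply: le_trans (ler_norm_sum _ _ _) _.
  apply: ler_sum => j _; apply: le_trans (ler_norm_sum _ _ _) _.
  apply: ler_sum => k _; rewrite !normrM.
  have -> : a i * c i * (a j * b j) * (b k * c k) = (a i * a j) * (b j * b k) * (c k * c i).
    by ring.
  apply: ler_pM; rewrite ?mulr_ge0 ?normr_ge0 //; last exact: psd_entry.
  by apply: ler_pM; rewrite ?normr_ge0 //; apply: psd_entry.
have -> : \sum_(i < n) \sum_(j < n) \sum_(k < n) (a i * c i) * (a j * b j) * (b k * c k) =
   (\sum_(i < n) a i * c i) * ((\sum_(j < n) a j * b j) * (\sum_(k < n) b k * c k)).
  exact: sum3_prod.
apply: mulr_ile1; rewrite ?mulr_ge0 ?sum_sq_ge0 ?sum_sq_le //.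
by apply: mulr_ile1; rewrite ?sum_sq_ge0 ?sum_sq_le.
Qed.

Lemma adjmx_mul m k l (A : 'M[C]_(m, k)) (B : 'M[C]_(k, l)) :
  @adjmx C _ _ (A *m B) = adjmx B *m adjmx A.
Proof.
apply/matrixP => i j; rewrite adjmxE !mxE rmorph_sum; apply: eq_bigr => x _.
by rewrite !adjmxE rmorphM mulrC.
Qed.

Lemma adjmxK m k (A : 'M[C]_(m, k)) : adjmx (adjmx A) = A.
Proof. by apply/matrixP => i j; rewrite !adjmxE conjCK. Qed.

Lemma conj_tr M : (\tr M)^* = \tr (adjmx M).
Proof. by rewrite rmorph_sum; apply: eq_bigr => i _; rewrite adjmxE. Qed.

Lemma tr2_real A B : adjmx A = A -> adjmx B = B -> \tr (A *m B) \is Num.real.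
Proof.
by move=> hA hB; rewrite CrealE conj_tr adjmx_mul hA hB mxtrace_mulC.
Qed.

Lemma tr3_conj A B D : adjmx A = A -> adjmx B = B -> adjmx D = D ->
  (\tr (A *m B *m D))^* = \tr (A *m D *m B).
Proof.
move=> hA hB hD'; rewrite conj_tr !adjmx_mul hA hB hD'.
by rewrite mulmxA mxtrace_mulC mulmxA.
Qed.

Lemma psd_sqr X : adjmx X = X -> psd (X *m X).
Proof.
move=> hX; split; first by rewrite adjmx_mul hX.
move=> v.
have -> : adjmx v *m (X *m X) *m v = adjmx (X *m v) *m (X *m v).
  by rewrite adjmx_mul hX !mulmxA.
rewrite mxE; apply: sumr_ge0 => k _.
by rewrite adjmxE -normCKC exprn_ge0.
Qed.

Lemma psd_tr_ge0 M : psd M -> 0 <= \tr M.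
Proof. by move=> h; apply: sumr_ge0 => i _; apply: psd_diag. Qed.

End Mat.


Section Main.
Variables (C : numClosedFieldType) (d T : nat) (rho : 'I_T -> 'M[C]_d).
Hypothesis hs : forall t, is_state (rho t).

Let htr t : \tr (rho t) = 1. Proof. by case: (hs t). Qed.
Let hpsd t : psd (rho t). Proof. by case: (hs t). Qed.
Let hher t : adjmx (rho t) = rho t. Proof. by case: (hpsd t). Qed.

Local Notation E Y := (expect (tensor_states rho) Y).
Local Notation S i j := (swap_op C d i j).
Local Notation g i j := (\tr (rho i *m rho j)).
Local Notation h i j l := (\tr (rho i *m rho j *m rho l)).

Lemma tD (i j t : 'I_T) : t != i -> t != j -> tperm i j t = t.
Proof. by move=> ti tj; apply: tpermD; rewrite eq_sym. Qed.

Lemma S_sym (i j : 'I_T) : S i j = S j i.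
Proof. by rewrite /swap_op tpermC. Qed.

Lemma ES (i j : 'I_T) : i != j -> E (S i j) = g i j.
Proof.
move=> ij; have ji : j != i by rewrite eq_sym.
rewrite swap_pop expect_pop (pexp_2 htr ij) ?tpermL ?tpermR //.
by move=> t ti tj; rewrite tD.
Qed.

Lemma ESS (i j : 'I_T) : E (S i j *m S i j) = 1.
Proof.
rewrite !swap_pop pop_mul expect_pop; apply: (pexp_id htr) => t.
by rewrite tpermK.
Qed.

Lemma ES3a (i j l : 'I_T) : i != j -> i != l -> j != l -> E (S i j *m S i l) = h i j l.
Proof.
move=> ij il jl; have ji : j != i by rewrite eq_sym.
have li : l != i by rewrite eq_sym.
have lj : l != j by rewrite eq_sym.
rewrite !swap_pop pop_mul expect_pop.
apply: (pexp_3 htr ij il jl).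
- by rewrite tpermL tD //.
- by rewrite tpermR tpermL.
- by rewrite (@tD i j) ?tpermR //.
by move=> t ti tj tl; rewrite !tD.
Qed.

Lemma ES3b (i j l : 'I_T) : i != j -> i != l -> j != l -> E (S i j *m S j l) = h i l j.
Proof.
move=> ij il jl; have ji : j != i by rewrite eq_sym.
have li : l != i by rewrite eq_sym.
have lj : l != j by rewrite eq_sym.
rewrite !swap_pop pop_mul expect_pop.
apply: (pexp_3 htr il ij lj).
- by rewrite tpermL tpermL.
- by rewrite (@tD i j) ?tpermR //.
- by rewrite tpermR tD //.
by move=> t ti tl tj; rewrite !tD.
Qed.

Lemma ES22 (i j k l : 'I_T) : i != j -> i != k -> i != l -> j != k -> j != l -> k != l ->
  E (S i j *m S k l) = g i j * g k l.
Proof.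
move=> ij ik il jk jl kl.
have ji : j != i by rewrite eq_sym.
have ki : k != i by rewrite eq_sym.
have li : l != i by rewrite eq_sym.
have kj : k != j by rewrite eq_sym.
have lj : l != j by rewrite eq_sym.
have lk : l != k by rewrite eq_sym.
rewrite !swap_pop pop_mul expect_pop.
apply: (pexp_22 htr ij ik il jk jl kl).
- by rewrite tpermL tD.
- by rewrite tpermR tD.
- by rewrite (@tD i j) ?tpermL //.
- by rewrite (@tD i j) ?tpermR //.
by move=> t ti tj tk tl; rewrite !tD.
Qed.


Lemma expectD (Y Z : 'M[C]_(tdim d T)) : E (Y + Z) = E Y + E Z.
Proof. by rewrite /expect mulmxDr mxtraceD. Qed.

Lemma expectN (Y : 'M[C]_(tdim d T)) : E (- Y) = - E Y.
Proof. by rewrite /expect mulmxN raddfN. Qed.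

Lemma expectZ a (Y : 'M[C]_(tdim d T)) : E (a *: Y) = a * E Y.
Proof. by rewrite /expect -scalemxAr mxtraceZ. Qed.

Lemma expect_sum (I : finType) (P : pred I) (F : I -> 'M[C]_(tdim d T)) :
  E (\sum_(i | P i) F i) = \sum_(i | P i) E (F i).
Proof. by rewrite /expect mulmx_sumr raddf_sum. Qed.

Lemma E1 : E (1%:M) = 1.
Proof. by rewrite expect1 (pexp_id htr). Qed.

Definition Pm := \sum_(i < T) \sum_(j < T | i != j) S i j.
Definition EP := \sum_(i < T) \sum_(j < T | i != j) g i j.
Definition Fv (i j l : 'I_T) := h i j l - g i j * g i l + (h i l j - g i j * g j l).

Lemma EPm : E Pm = EP.
Proof.
rewrite /Pm expect_sum; apply: eq_bigr => i _; rewrite expect_sum.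
by apply: eq_bigr => j ij; rewrite ES.
Qed.

Lemma W_eq : E (Pm *m Pm) - EP ^+ 2 =
  \sum_(i < T) \sum_(j < T | i != j)
     (2 * (1 - g i j ^+ 2) + 2 * \sum_(l < T | (l != i) && (l != j)) Fv i j l).
Proof.
have -> : E (Pm *m Pm) - EP ^+ 2 = \sum_(i < T) \sum_(j < T | i != j)
   \sum_(k < T) \sum_(l < T | k != l) (E (S i j *m S k l) - E (S i j) * E (S k l)).
  rewrite -EPm expr2 {1 3}/Pm mulmx_suml !expect_sum big_distrl -sumrB.
  apply: eq_bigr => i _; rewrite mulmx_suml !expect_sum big_distrl -sumrB.
  apply: eq_bigr => j _; rewrite /Pm mulmx_sumr !expect_sum big_distrr -sumrB.
  apply: eq_bigr => k _; rewrite mulmx_sumr !expect_sum big_distrr -sumrB.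
  by apply: eq_bigr => l _.
apply: eq_bigr => i _; apply: eq_bigr => j ij.
rewrite (pair_sum (i := i) (j := j)) //.
- rewrite ESS (ES ij) expr2; congr (_ + _); congr (_ * _).
  apply: eq_bigr => l /andP[li lj].
  have il : i != l by rewrite eq_sym.
  have jl : j != l by rewrite eq_sym.
  by rewrite /Fv ES3a // ES3b // (ES il) (ES jl).
- by move=> k l; rewrite (S_sym k l).
move=> k l kl ki kj li lj.
rewrite ES22 ?(ES ij) ?(ES kl) ?subrr //; by rewrite eq_sym.
Qed.


Hypotheses (hd : (0 < d)%N) (hT : (0 < T)%N).

Local Notation a := ((T%:R ^+ 2)^-1 : C).
Local Notation c := ((d%:R)^-1 : C).
Local Notation R := (rho_avg rho).
Local Notation Dl := (rho_avg rho - (d%:R)^-1 *: 1%:M).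

Lemma Tn0 : (T%:R : C) != 0. Proof. by rewrite pnatr_eq0 -lt0n. Qed.
Lemma dn0 : (d%:R : C) != 0. Proof. by rewrite pnatr_eq0 -lt0n. Qed.

Lemma EA : E (obsA C d T) = a * EP - c.
Proof.
by rewrite /obsA -/Pm expectD expectN !expectZ EPm E1 mulr1.
Qed.

Lemma VarE : variance (tensor_states rho) (obsA C d T) = a ^+ 2 * (E (Pm *m Pm) - EP ^+ 2).
Proof.
rewrite /variance EA /obsA -/Pm mulmxBl !mulmxBr -!scalemxAl -!scalemxAr !mul1mx !mulmx1.
rewrite !(expectD, expectN, expectZ) EPm E1; ring.
Qed.

Lemma conjM (x y : C) : (x * y)^* = x^* * y^*. Proof. by rewrite rmorphM. Qed.
Lemma conjD (x y : C) : (x + y)^* = x^* + y^*. Proof. by rewrite rmorphD. Qed.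
Lemma conjB (x y : C) : (x - y)^* = x^* - y^*. Proof. by rewrite rmorphB. Qed.
Lemma conj_sum (I : finType) (P : pred I) (F : I -> C) :
  (\sum_(i | P i) F i)^* = \sum_(i | P i) (F i)^*.
Proof. by rewrite rmorph_sum. Qed.
Lemma conj_nat n : (n%:R : C)^* = n%:R. Proof. by rewrite rmorph_nat. Qed.

Lemma real_inv_nat n : ((n%:R)^-1 : C)^* = (n%:R)^-1.
Proof. by apply: conj_Creal; rewrite realV realn. Qed.

Lemma R_entry i j : R i j = (T%:R)^-1 * \sum_(t < T) rho t i j.
Proof. rewrite /rho_avg mxE; congr (_ * _); exact: summxE. Qed.

Lemma R_herm : adjmx R = R.
Proof.
apply/matrixP => i j; rewrite adjmxE !R_entry conjM real_inv_nat conj_sum; congr (_ * _); apply: eq_bigr => t _.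
by rewrite herm_conj.
Qed.

Lemma Dl_herm : adjmx Dl = Dl.
Proof.
have := R_herm; set RR := rho_avg rho; clearbody RR => hR.
apply/matrixP => i j; rewrite adjmxE !mxE conjB conjM real_inv_nat.
rewrite herm_conj //; congr (_ - _ * _).
by rewrite conj_nat eq_sym.
Qed.

Lemma trR : \tr R = 1.
Proof.
rewrite /rho_avg mxtraceZ raddf_sum /=.
under eq_bigr do rewrite htr.
by rewrite sumr_const card_ord mulVf // Tn0.
Qed.


Local Notation Sr := (\sum_(t < T) rho t).
Local Notation p := (\tr (R *m R)).
Local Notation q := (\tr (R *m R *m R)).
Local Notation G i := (\tr (rho i *m R)).

Lemma Sr_R : Sr = T%:R *: R.
Proof. by rewrite /rho_avg scalerA mulfV ?Tn0 // scale1r. Qed.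

Lemma sum_g_row i : \sum_(j < T) g i j = T%:R * G i.
Proof.
have -> : \sum_(j < T) g i j = \tr (rho i *m Sr) by rewrite mulmx_sumr raddf_sum.
by rewrite Sr_R -scalemxAr mxtraceZ.
Qed.

Lemma sum_g_col j : \sum_(i < T) g i j = T%:R * G j.
Proof.
rewrite -sum_g_row; apply: eq_bigr => i _; exact: mxtrace_mulC.
Qed.

Lemma sum_G : \sum_(i < T) G i = T%:R * p.
Proof.
have -> : \sum_(i < T) G i = \tr (Sr *m R) by rewrite mulmx_suml raddf_sum.
by rewrite Sr_R -scalemxAl mxtraceZ.
Qed.

Lemma sum_h : \sum_(i < T) \sum_(j < T) \sum_(l < T) h i j l = T%:R ^+ 3 * q.
Proof.
have := Sr_R; set X := rho_avg rho; clearbody X => e.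
have -> : T%:R ^+ 3 * \tr (X *m X *m X) = \tr (Sr *m Sr *m Sr).
  by rewrite e -!scalemxAl -!scalemxAr -?scalemxAl -?scalemxAr -?scalemxAl !mxtraceZ; ring.
rewrite (mulmx_suml Sr) (mulmx_suml Sr) raddf_sum; apply: eq_bigr => i _ /=.
rewrite (mulmx_sumr (rho i)) (mulmx_suml Sr) raddf_sum; apply: eq_bigr => j _ /=.
by rewrite (mulmx_sumr (rho i *m rho j)) raddf_sum.
Qed.


Local Notation mu := (\tr (Dl *m Dl)).

Lemma g_real i j : g i j \is Num.real.
Proof. exact: tr2_real. Qed.

Lemma G_real i : G i \is Num.real.
Proof. exact: tr2_real (hher i) R_herm. Qed.

Lemma p_real : p \is Num.real.
Proof. exact: tr2_real R_herm R_herm. Qed.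

Lemma g_le1 i j : `|g i j| <= 1.
Proof. by apply: le_trans (tr_mul_le (hpsd i) (hpsd j)) _; rewrite !htr mulr1. Qed.

Lemma h_le1 i j l : `|h i j l| <= 1.
Proof. exact: tr3_le. Qed.

Lemma h_conj i j l : (h i j l)^* = h i l j.
Proof. exact: tr3_conj. Qed.

Lemma Fv_real i j l : Fv i j l \is Num.real.
Proof.
have -> : Fv i j l = (h i j l + (h i j l)^*) - g i j * g i l - g i j * g j l.
  by rewrite h_conj /Fv; ring.
rewrite !rpredB ?rpredM ?g_real //.
by rewrite CrealE conjD conjCK addrC.
Qed.

Lemma Fv_le4 i j l : `|Fv i j l| <= 4.
Proof.
rewrite /Fv; apply: le_trans (ler_normD _ _) _.
have e : (4 : C) = 2 + 2 by rewrite -natrD.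
rewrite e; apply: lerD; apply: le_trans (ler_normB _ _) _;
  (rewrite -[2 : C]/(1 + 1); apply: lerD; [exact: h_le1|]);
  by rewrite normrM; apply: mulr_ile1; rewrite ?normr_ge0 ?g_le1.
Qed.

Lemma sum_Fv : \sum_(i < T) \sum_(j < T) \sum_(l < T) Fv i j l =
  2 * (T%:R ^+ 3 * q) - 2 * (T%:R ^+ 2 * \sum_(i < T) G i ^+ 2).
Proof.
have e1 : \sum_(i < T) \sum_(j < T) \sum_(l < T) h i l j = T%:R ^+ 3 * q.
  by rewrite -sum_h; apply: eq_bigr => i _; rewrite exchange_big.
have e2 : \sum_(i < T) \sum_(j < T) \sum_(l < T) (g i j * g i l) =
          T%:R ^+ 2 * \sum_(i < T) G i ^+ 2.
  rewrite mulr_sumr; apply: eq_bigr => i _.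
  transitivity ((\sum_(j < T) g i j) * (\sum_(l < T) g i l)).
    by rewrite big_distrl; apply: eq_bigr => j _; rewrite big_distrr.
  by rewrite sum_g_row; ring.
have e3 : \sum_(i < T) \sum_(j < T) \sum_(l < T) (g i j * g j l) =
          T%:R ^+ 2 * \sum_(i < T) G i ^+ 2.
  transitivity (\sum_(i < T) \sum_(j < T) (g i j * (T%:R * G j))).
    apply: eq_bigr => i _; apply: eq_bigr => j _.
    by rewrite -sum_g_row big_distrr.
  rewrite exchange_big mulr_sumr; apply: eq_bigr => j _.
  by rewrite -big_distrl sum_g_col /=; ring.
have -> : 2 * (T%:R ^+ 3 * q) - 2 * (T%:R ^+ 2 * \sum_(i < T) G i ^+ 2) =
  (\sum_(i < T) \sum_(j < T) \sum_(l < T) h i j l -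
   \sum_(i < T) \sum_(j < T) \sum_(l < T) (g i j * g i l)) +
  (\sum_(i < T) \sum_(j < T) \sum_(l < T) h i l j -
   \sum_(i < T) \sum_(j < T) \sum_(l < T) (g i j * g j l)).
  by rewrite sum_h e1 e2 e3; ring.
rewrite -!sumrB -big_split /=; apply: eq_bigr => i _.
rewrite -!sumrB -big_split /=; apply: eq_bigr => j _.
rewrite -!sumrB -big_split /=; apply: eq_bigr => l _.
by rewrite /Fv.
Qed.


Lemma trB n (A B : 'M[C]_n) : \tr (A - B) = \tr A - \tr B.
Proof. by rewrite raddfB. Qed.

Lemma mu_eq : mu = p - c.
Proof.
have := trR; set X := rho_avg rho; clearbody X => tX.
rewrite mulmxBl !mulmxBr -!scalemxAl -!scalemxAr !mul1mx !mulmx1.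
rewrite !trB !mxtraceZ mxtrace1 tX.
by field; rewrite dn0.
Qed.

Lemma trRQ : \tr (R *m (Dl *m Dl)) = q - 2 * c * p + c ^+ 2.
Proof.
have := trR; set X := rho_avg rho; clearbody X => tX.
rewrite mulmxBl !mulmxBr -!scalemxAl -!scalemxAr !mul1mx !mulmx1.
rewrite mulmxA !trB !mxtraceZ tX.
by field; rewrite dn0.
Qed.

Lemma Q_psd : psd (Dl *m Dl).
Proof. exact: psd_sqr Dl_herm. Qed.

Lemma mu_ge0 : 0 <= mu.
Proof. exact: psd_tr_ge0 Q_psd. Qed.

Lemma trRQ_le : `|\tr (R *m (Dl *m Dl))| <= mu.
Proof.
have := Q_psd; set Q := Dl *m Dl; clearbody Q => hQ.
have hQ' t : `|\tr (rho t *m Q)| <= \tr Q.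
  by apply: le_trans (tr_mul_le (hpsd t) hQ) _; rewrite htr mul1r.
rewrite /rho_avg -scalemxAl mxtraceZ (mulmx_suml Q) raddf_sum /= normrM.
rewrite ger0_norm ?invr_ge0 ?ler0n //.
apply: (@le_trans _ _ (T%:R^-1 * \sum_(t < T) \tr Q)).
  apply: ler_wpM2l; first by rewrite invr_ge0 ler0n.
  by apply: le_trans (ler_norm_sum _ _ _) _; apply: ler_sum => t _; exact: hQ'.
by rewrite sumr_const card_ord -[X in _ * X <= _]mulr_natr mulrCA mulVf ?Tn0 // mulr1.
Qed.

Lemma qp_le : q - p ^+ 2 <= mu.
Proof.
have e : q - p ^+ 2 = \tr (R *m (Dl *m Dl)) - mu ^+ 2.
  by rewrite trRQ mu_eq; ring.
rewrite e; apply: (@le_trans _ _ (\tr (R *m (Dl *m Dl)))).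
  rewrite lerBlDr lerDl; apply: exprn_ge0; exact: mu_ge0.
apply: le_trans (trRQ_le); apply: real_ler_norm.
by apply: tr2_real; [exact: R_herm | exact: psd_herm Q_psd].
Qed.


Lemma mu_real : mu \is Num.real.
Proof. exact: ger0_real mu_ge0. Qed.

Lemma sumG2 : T%:R * p ^+ 2 <= \sum_(i < T) G i ^+ 2.
Proof.
have h0 : 0 <= \sum_(i < T) (G i - p) ^+ 2.
  apply: sumr_ge0 => i _; apply: real_exprn_even_ge0 => //.
  by apply: rpredB; [exact: G_real | exact: p_real].
have e : \sum_(i < T) (G i - p) ^+ 2 = \sum_(i < T) G i ^+ 2 - T%:R * p ^+ 2.
  rewrite (eq_bigr (fun i => (G i ^+ 2 - 2 * p * G i) + p ^+ 2)); last by move=> i _; ring.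
  rewrite big_split sumrB /= -mulr_sumr sum_G sumr_const card_ord -mulr_natl; ring.
by rewrite -subr_ge0 -e.
Qed.

Lemma sum_Fv_le : \sum_(i < T) \sum_(j < T) \sum_(l < T) Fv i j l <= 2 * T%:R ^+ 3 * mu.
Proof.
rewrite sum_Fv.
apply: (@le_trans _ _ (2 * (T%:R ^+ 3 * q) - 2 * (T%:R ^+ 2 * (T%:R * p ^+ 2)))).
  rewrite lerD2l lerN2; apply: ler_wpM2l; first by rewrite ler0n.
  by apply: ler_wpM2l; [rewrite exprn_ge0 ?ler0n | exact: sumG2].
have -> : 2 * (T%:R ^+ 3 * q) - 2 * (T%:R ^+ 2 * (T%:R * p ^+ 2)) =
          2 * T%:R ^+ 3 * (q - p ^+ 2) by ring.
by apply: ler_wpM2l; [rewrite mulr_ge0 ?exprn_ge0 ?ler0n | exact: qp_le].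
Qed.

Definition dist3 (i j l : 'I_T) := (i != j) && (l != i) && (l != j).

Lemma sum_dist (F : 'I_T -> 'I_T -> 'I_T -> C) :
  \sum_(i < T) \sum_(j < T | i != j) \sum_(l < T | (l != i) && (l != j)) F i j l =
  \sum_(i < T) \sum_(j < T) \sum_(l < T) ((dist3 i j l)%:R * F i j l).
Proof.
apply: eq_bigr => i _; rewrite big_mkcond; apply: eq_bigr => j _ /=.
case: (eqVneq i j) => [<-|ij] /=.
  by rewrite big1 // => l _; rewrite /dist3 eqxx /= mul0r.
rewrite big_mkcond; apply: eq_bigr => l _ /=.
rewrite /dist3 ij /=; case: (_ && _); by rewrite ?mul1r ?mul0r.
Qed.

Lemma nd_le (i j l : 'I_T) :
  ((~~ dist3 i j l)%:R : C) <= (i == j)%:R + (l == i)%:R + (l == j)%:R.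
Proof.
rewrite -!natrD ler_nat /dist3.
by case: (i == j); case: (l == i); case: (l == j).
Qed.

Lemma sum_ind3 : \sum_(i < T) \sum_(j < T) \sum_(l < T)
   (((i == j)%:R + (l == i)%:R + (l == j)%:R) * 4 : C) = 12 * T%:R ^+ 2.
Proof.
have d1 (n : nat) (v : 'I_n) : \sum_(x < n) ((x == v)%:R : C) = 1.
  by rewrite (bigD1 v) //= eqxx big1 ?addr0 // => x /negbTE ->.
have d2 (n : nat) (v : 'I_n) : \sum_(x < n) ((v == x)%:R : C) = 1.
  by rewrite (bigD1 v) //= eqxx big1 ?addr0 // => x; rewrite eq_sym => /negbTE ->.
transitivity (\sum_(i < T) \sum_(j < T) (((i == j)%:R * T%:R + 2) * 4 : C)).
  apply: eq_bigr => i _; apply: eq_bigr => j _.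
  rewrite -big_distrl /= !big_split /= d1 d1 sumr_const card_ord; ring.
transitivity (\sum_(i < T) ((T%:R + 2 * T%:R) * 4 : C)).
  apply: eq_bigr => i _; rewrite -big_distrl /= big_split /= -big_distrl /= d2.
  rewrite sumr_const card_ord; ring.
rewrite sumr_const card_ord; ring.
Qed.


Lemma dist_le : \sum_(i < T) \sum_(j < T | i != j) \sum_(l < T | (l != i) && (l != j)) Fv i j l
  <= 2 * T%:R ^+ 3 * mu + 12 * T%:R ^+ 2.
Proof.
rewrite sum_dist.
set Y := \sum_(i < T) \sum_(j < T) \sum_(l < T) ((~~ dist3 i j l)%:R * Fv i j l).
have eS : \sum_(i < T) \sum_(j < T) \sum_(l < T) Fv i j l =
   \sum_(i < T) \sum_(j < T) \sum_(l < T) ((dist3 i j l)%:R * Fv i j l) + Y.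
  rewrite /Y -big_split /=; apply: eq_bigr => i _; rewrite -big_split /=.
  apply: eq_bigr => j _; rewrite -big_split /=; apply: eq_bigr => l _.
  by case: (dist3 i j l); rewrite /= ?mul1r ?mul0r ?addr0 ?add0r.
have -> : \sum_(i < T) \sum_(j < T) \sum_(l < T) ((dist3 i j l)%:R * Fv i j l) =
   \sum_(i < T) \sum_(j < T) \sum_(l < T) Fv i j l - Y by rewrite eS addrK.
apply: lerD; first exact: sum_Fv_le.
have Yr : Y \is Num.real.
  by apply: rpred_sum => i _; apply: rpred_sum => j _; apply: rpred_sum => l _;
     apply: rpredM; [exact: realn | exact: Fv_real].
rewrite -sum_ind3 lerNl; apply: real_lerNnormlW => //.
apply: le_trans (ler_norm_sum _ _ _) _; apply: ler_sum => i _.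
apply: le_trans (ler_norm_sum _ _ _) _; apply: ler_sum => j _.
apply: le_trans (ler_norm_sum _ _ _) _; apply: ler_sum => l _.
rewrite normrM ger0_norm ?ler0n //.
by apply: ler_pM; rewrite ?ler0n ?normr_ge0 ?nd_le ?Fv_le4.
Qed.

Lemma W_le : E (Pm *m Pm) - EP ^+ 2 <= 26 * T%:R ^+ 2 + 4 * T%:R ^+ 3 * mu.
Proof.
rewrite W_eq.
under eq_bigr do rewrite big_split /= -!mulr_sumr.
rewrite big_split /= -!mulr_sumr.
apply: (@le_trans _ _ (2 * T%:R ^+ 2 + 2 * (2 * T%:R ^+ 3 * mu + 12 * T%:R ^+ 2))); last first.
  by rewrite le_eqVlt; apply/orP; left; apply/eqP; ring.
apply: lerD; apply: ler_wpM2l; rewrite ?ler0n //; last exact: dist_le.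
apply: (@le_trans _ _ (\sum_(i < T) \sum_(j < T) (1 : C))); last first.
  by rewrite !sumr_const !card_ord le_eqVlt; apply/orP; left; apply/eqP; ring.
apply: ler_sum => i _.
apply: (@le_trans _ _ (\sum_(j < T | i != j) (1 : C))).
  apply: ler_sum => j _; rewrite lerBlDr lerDl.
  by apply: real_exprn_even_ge0 => //; exact: g_real.
rewrite [X in _ <= X](bigID (fun j => i != j)) /= lerDl.
by apply: sumr_ge0 => j _; exact: ler01.
Qed.


Lemma sum_gg : \sum_(i < T) \sum_(j < T) g i j = T%:R ^+ 2 * p.
Proof.
have := Sr_R; set X := rho_avg rho; clearbody X => e.
have -> : T%:R ^+ 2 * \tr (X *m X) = \tr (Sr *m Sr).
  by rewrite e -scalemxAl -scalemxAr !mxtraceZ; ring.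
rewrite (mulmx_suml Sr) raddf_sum; apply: eq_bigr => i _ /=.
by rewrite (mulmx_sumr (rho i)) raddf_sum.
Qed.

Lemma EP_eq : EP = \sum_(i < T) \sum_(j < T) g i j - \sum_(i < T) g i i.
Proof.
rewrite /EP -sumrB; apply: eq_bigr => i _.
rewrite [\sum_(j < T) g i j](bigD1 i) //= [g i i + _]addrC addrK.
by apply: eq_bigl => j; rewrite eq_sym.
Qed.

Lemma mean_bound : `|E (obsA C d T) - mu| <= T%:R^-1.
Proof.
rewrite EA mu_eq EP_eq sum_gg.
have -> : a * (T%:R ^+ 2 * p - \sum_(i < T) g i i) - c - (p - c) =
          - (a * \sum_(i < T) g i i).
  by field; rewrite ?Tn0 ?dn0.
rewrite normrN normrM ger0_norm ?invr_ge0 ?exprn_ge0 ?ler0n //.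
apply: (@le_trans _ _ (a * T%:R)); last first.
  by rewrite le_eqVlt; apply/orP; left; apply/eqP; field; rewrite Tn0.
apply: ler_wpM2l; first by rewrite invr_ge0 exprn_ge0 ?ler0n.
apply: le_trans (ler_norm_sum _ _ _) _.
apply: (@le_trans _ _ (\sum_(i < T) (1 : C))); first by apply: ler_sum => i _; exact: g_le1.
by rewrite sumr_const card_ord le_eqVlt; apply/orP; left; apply/eqP; ring.
Qed.

Lemma var_bound : variance (tensor_states rho) (obsA C d T) <=
  26%:R * (mu / T%:R + (T%:R ^+ 2)^-1).
Proof.
rewrite VarE.
have Tp : 0 < (T%:R : C) by rewrite ltr0n.
apply: (@le_trans _ _ (a ^+ 2 * (26 * T%:R ^+ 2 + 4 * T%:R ^+ 3 * mu))).
  by apply: ler_wpM2l; [rewrite exprn_ge0 // invr_ge0 exprn_ge0 ?ler0n | exact: W_le].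
have -> : a ^+ 2 * (26 * T%:R ^+ 2 + 4 * T%:R ^+ 3 * mu) =
   26%:R * (T%:R ^+ 2)^-1 + 4%:R * (mu / T%:R).
  by field; rewrite ?Tn0 ?dn0.
rewrite mulrDr addrC lerD2r.
apply: ler_wpM2r; first by rewrite divr_ge0 ?mu_ge0 ?ler0n.
by rewrite ler_nat.
Qed.

End Main.

Theorem lemma7p2 :
  exists K : rat, 0 < K /\
  forall (C : numClosedFieldType) (d T : nat) (rho : 'I_T -> 'M[C]_d),
    (0 < d)%N -> (0 < T)%N ->
    (forall t, is_state (rho t)) ->
    let vrho := tensor_states rho in
    let A := obsA C d T in
    let mu := mu_of rho in
    `|expect vrho A - mu| <= (T%:R)^-1 /\
    variance vrho A <= ratr K * (mu / T%:R + (T%:R ^+ 2)^-1).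
Proof.
exists 26%:R; split; first by rewrite ltr0n.
move=> C d T rho hd hT hs vrho A mu.
rewrite /vrho /A /mu /mu_of /= rmorph_nat.
split; first exact: mean_bound.
exact: var_bound.
Qed.
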